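(* Let $n\ge 1$, $k\ge1$, and $k=k_1+k_2$ with $k_1,k_2\ge 0$. Let $E$ be the set of all triples $(u,w,c)$ with $u\neq w$ in $[n]$ and $c\in[k]$, and let $\mathcal I$ be either (i) the set of all $(k_1,k_2)$-decreasing $k$-colored rooted forests on $[n]$, or (ii) the set of all $(k_1,k_2)$-non-increasing $k$-colored rooted forests on $[n]$. Then $(E,\mathcal I)$ is an $(n-1)$-covering system whose bases are the $k$-colored rooted trees in $\mathcal I$, and the map $\texttt{a}$ defined on each such tree $T$ by $$\texttt{a}(T)=\{(n,i,1)\in T:\ i\in[n]\}$$ (the set of edges of $T$ whose parent is $n$ and whose color is $1$) is an activity of $(E,\mathcal I)$.
   Context: For finite sets $X\subseteq Y$, write $[X,Y]=\{Z: X\subseteq Z\subseteq Y\}$. An $r$-covering system is a pair $(E,\mathcal I)$ where $E$ is a finite set and $\mathcal I$ is a collection of subsets of $E$, each of cardinality at most $r$, such that for every $I\in\mathcal I$ there exists $B\in\mathcal I$ with $|B|=r$ and $[I,B]\subseteq\mathcal I$; members of cardinality $r$ are bases. An activity is a function $\texttt{a}$ on the set $\mathcal B$ of bases with $\texttt{a}(B)\subseteq B$, $[B\setminus\texttt{a}(B),B]\subseteq\mathcal I$ for all $B$, and such that every $I\in\mathcal I$ lies in $[B\setminus\texttt{a}(B),B]$ for exactly one $B\in\mathcal B$. A $k$-colored rooted forest on $[n]$ is a set $F$ of triples $(u,w,c)$ ($u\ne w\in[n]$, $c\in[k]$; read as an edge from parent $u$ to child $w$ with color $c$) such that every vertex is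 the child in at most one triple and the underlying graph has no cycle; vertices that are not children are the roots (one per component). It is a tree if it has $n-1$ edges. For a vertex $v$ having at least one child, let $c_v$ be the minimum color of the edges from $v$ to its children. Given $k=k_1+k_2$, the forest is $(k_1,k_2)$-decreasing if for every vertex $v$ having a child and with $c_v\le k_1$, every child $w$ of $v$ joined to $v$ by an edge of color $c_v$ satisfies $w<v$. It is $(k_1,k_2)$-non-increasing if for every vertex $v$ having a child and with $c_v\le k_1$, at least one child $w$ of $v$ joined to $v$ by an edge of color $c_v$ satisfies $w<v$. (Colors in $[k_1+1,k]$ are ''free'': they are never checked.) *)

(* Defs.v *)
From mathcomp Require Import all_boot all_order.
Set Implicit Arguments. Unset Strict Implicit. Unset Printing Implicit Defensive.

Section Covering.
Variable T : finType.

Definition in_interval (X Y Z : {set T}) : Prop := X \subset Z /\ Z \subset Y.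

Definition covering_system (E : {set T}) (I : {set T} -> Prop) (r : nat) : Prop :=
  (forall X, I X -> X \subset E) /\
  (forall X, I X -> #|X| <= r) /\
  (forall X, I X -> exists B, [/\ I B, #|B| = r, X \subset B &
                       forall Z, in_interval X B Z -> I Z]).

Definition is_basis (I : {set T} -> Prop) (r : nat) (B : {set T}) : Prop :=
  I B /\ #|B| = r.

Definition is_activity (I : {set T} -> Prop) (r : nat)
    (a : {set T} -> {set T}) : Prop :=
  (forall B, is_basis I r B -> a B \subset B) /\
  (forall B, is_basis I r B ->
     forall Z, in_interval (B :\: a B) B Z -> I Z) /\
  (forall X, I X -> exists B, [/\ is_basis I r B, in_interval (B :\: a B) B X &
       forall B', is_basis I r B' -> in_interval (B' :\: a B') B' X -> B' = B]).
End Covering.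

(* ---------- Colored rooted forests on [n] with colors in [k] ----------
   Vertices [n] are 'I_n (vertex i+1 of the paper is the ordinal i) and
   colors [k] are 'I_k (color c+1 of the paper is the ordinal c). *)
Section Forests.
Variables n k : nat.
Definition triple := ('I_n * 'I_n * 'I_k)%type.

Definition parent (e : triple) : 'I_n := e.1.1.
Definition child (e : triple) : 'I_n := e.1.2.
Definition color (e : triple) : 'I_k := e.2.

Definition Eset : {set triple} := [set e : triple | parent e != child e].

Definition joins (e : triple) (x y : 'I_n) : bool :=
  ((parent e == x) && (child e == y)) || ((parent e == y) && (child e == x)).

Definition has_cycle (F : {set triple}) : Prop :=
  exists (es : seq triple) (vs : seq 'I_n),
    [/\ 0 < size es, uniq es, uniq vs, all (fun e => e \in F) es &
        all2 (fun e p => joins e p.1 p.2) es (zip vs (rot 1 vs))].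

Definition colored_forest (F : {set triple}) : Prop :=
  [/\ F \subset Eset,
      (forall w : 'I_n, #|[set e in F | child e == w]| <= 1) &
      ~ has_cycle F].

Definition colored_tree (F : {set triple}) : Prop :=
  colored_forest F /\ #|F| = n.-1.

Definition has_child (F : {set triple}) (v : 'I_n) : bool :=
  [exists e in F, parent e == v].

Definition cmin (F : {set triple}) (v : 'I_n) : nat :=
  \big[minn/k]_(e in F | parent e == v) (nat_of_ord (color e)).

(* (k1,k2)-decreasing; the paper's condition c_v <= k1 becomes cmin < k1
   under the 0-based shift of colors *)
Definition decreasing (k1 : nat) (F : {set triple}) : Prop :=
  forall v : 'I_n, has_child F v -> cmin F v < k1 ->
    forall e, e \in F -> parent e = v -> nat_of_ord (color e) = cmin F v ->
      child e < v.

Definition non_increasing (k1 : nat) (F : {set triple}) : Prop :=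
  forall v : 'I_n, has_child F v -> cmin F v < k1 ->
    exists e, [/\ e \in F, parent e = v, nat_of_ord (color e) = cmin F v &
                  child e < v].

(* the activity: edges of T with parent n (ordinal n-1) and color 1 (ordinal 0) *)
Definition act (B : {set triple}) : {set triple} :=
  [set e in B | (nat_of_ord (parent e) == n.-1) && (nat_of_ord (color e) == 0)].
End Forests.

(* Main.v *)
Require Import Defs.
From mathcomp Require Import all_boot all_order zify.
Set Implicit Arguments. Unset Strict Implicit. Unset Printing Implicit Defensive.

Definition par n k (F : {set triple n k}) : rel 'I_n :=
  fun u w => [exists e in F, (parent e == u) && (child e == w)].
Definition isroot n k (F : {set triple n k}) (v : 'I_n) : bool :=
  ~~ [exists e in F, child e == v].
Definition injc n k (F : {set triple n k}) := {in F &, injective (@child n k)}.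

Lemma indeg1_inj n k (F : {set triple n k}) :
  (forall w, #|[set e in F | child e == w]| <= 1) -> injc F.
Proof.
move=> H e1 e2 h1 h2 he; have /card_le1_eqP := H (child e1); apply.
  by apply/setIdP; split; rewrite // he.
by apply/setIdP; split.
Qed.

Lemma inj_indeg1 n k (F : {set triple n k}) :
  injc F -> forall w, #|[set e in F | child e == w]| <= 1.
Proof.
move=> H w; apply/card_le1_eqP => x y /setIdP[xF /eqP xw] /setIdP[yF /eqP yw].
by apply: H => //; rewrite xw yw.
Qed.

Lemma forest_inj n k (F : {set triple n k}) : colored_forest F -> injc F.
Proof. by case=> _ H _; apply: indeg1_inj. Qed.

Lemma forest_sub n k (F G : {set triple n k}) :
  F \subset G -> colored_forest G -> colored_forest F.
Proof.
move=> sFG [sGE H nc]; split.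
- exact: subset_trans sFG sGE.
- move=> w; apply: leq_trans (H w); apply: subset_leq_card.
  by apply/subsetP => e; rewrite !inE => /andP[/(subsetP sFG) -> ->].
- move=> [es [vs [h1 h2 h3 h4 h5]]]; apply: nc; exists es, vs; split => //.
  by apply/allP => e /(allP h4) /(subsetP sFG).
Qed.

Lemma path_zip (T : Type) (r : T -> T -> bool) x p z :
  path r x p -> r (last x p) z -> all (fun q => r q.1 q.2) (zip (x :: p) (rcons p z)).
Proof.
elim: p x => [|y p IH] x /=; first by move=> _ ->.
by move=> /andP[-> hp] hl; rewrite IH.
Qed.

Lemma all2_map (A B : Type) (r : A -> B -> bool) (f : B -> A) s :
  all2 r (map f s) s = all (fun x => r (f x) x) s.
Proof. by elim: s => //= x s ->. Qed.

Lemma all2_mem (A B : eqType) (r : A -> B -> bool) s t x :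
  all2 r s t -> x \in s -> exists2 y, y \in t & r x y.
Proof.
elim: s t => [|a s IH] [|b t] //= /andP[hab ht]; rewrite inE => /orP[/eqP->|xs].
  by exists b; rewrite ?inE ?eqxx.
by have [y yt ry] := IH _ ht xs; exists y; rewrite ?inE ?yt ?orbT.
Qed.

Lemma zip_mem (A B : eqType) (s : seq A) (t : seq B) q :
  q \in zip s t -> q.1 \in s /\ q.2 \in t.
Proof.
elim: s t => [|a s IH] [|b t] //=; rewrite inE => /orP[/eqP->|/IH[h1 h2]].
  by rewrite !inE !eqxx.
by rewrite !inE h1 h2 !orbT.
Qed.
Lemma par_edge n k (F : {set triple n k}) u w :
  par F u w -> exists2 e, e \in F & parent e = u /\ child e = w.
Proof. by case/existsP=> e /andP[eF /andP[/eqP h1 /eqP h2]]; exists e. Qed.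

Lemma edge_par n k (F : {set triple n k}) e : e \in F -> par F (parent e) (child e).
Proof. by move=> eF; apply/existsP; exists e; rewrite eF !eqxx. Qed.

Definition inedge n k (F : {set triple n k}) (e0 : triple n k) (y : 'I_n) :=
  odflt e0 [pick e in F | child e == y].

Lemma inedge_spec n k (F : {set triple n k}) e0 x y : injc F -> par F x y ->
  [/\ inedge F e0 y \in F, parent (inedge F e0 y) = x & child (inedge F e0 y) = y].
Proof.
move=> inj /par_edge[e eF [pe ce]]; rewrite /inedge.
case: pickP => [f /andP[fF /eqP cf]|/(_ e)]; last by rewrite eF ce eqxx.
have ef : f = e by apply: inj => //; rewrite cf ce.
by rewrite /= ef.
Qed.

Lemma dicycle n k (F : {set triple n k}) u w : injc F -> ~ has_cycle F ->
  par F u w -> ~~ connect (par F) w u.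
Proof.
move=> inj nc puw; apply/negP => /connectP[p pp eu]; subst u.
case/par_edge: (puw) => e0 _ _.
move: puw; case: (shortenP pp) => p' pp' up' _ puw.
set prs := zip (w :: p') (rcons p' w).
have hall := path_zip pp' puw; rewrite -/prs in hall.
have hq : forall q, q \in prs -> [/\ inedge F e0 q.2 \in F,
   parent (inedge F e0 q.2) = q.1 & child (inedge F e0 q.2) = q.2].
  by move=> q qin; apply: inedge_spec => //; exact: (allP hall q qin).
apply: nc; exists (map (fun q => inedge F e0 q.2) prs), (w :: p'); split.
- by rewrite size_map /prs size_zip /= size_rcons minnn.
- rewrite map_inj_in_uniq; first exact: zip_uniql.
  move=> [a b] [c d] /hq[_ /= h1 h2] /hq[_ /= h3 h4] /= he.
  by rewrite -h1 -h2 -h3 -h4 he.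
- exact: up'.
- by apply/allP => e /mapP[q /hq[h _ _] ->].
- rewrite rot1_cons all2_map; apply/allP => q /hq[_ h1 h2].
  by rewrite /joins h1 h2 !eqxx.
Qed.
Definition hgt n k (F : {set triple n k}) v := #|[set x | connect (par F) x v]|.

Lemma hgt_lt n k (F : {set triple n k}) e : injc F -> ~ has_cycle F -> e \in F ->
  hgt F (parent e) < hgt F (child e).
Proof.
move=> inj nc eF; apply: proper_card; rewrite properE; apply/andP; split.
  apply/subsetP => x; rewrite !inE => hx.
  exact: connect_trans hx (connect1 (edge_par eF)).
apply/negP => /subsetP /(_ (child e)); rewrite !inE connect0 => /(_ isT) h.
by move: (dicycle inj nc (edge_par eF)); rewrite h.
Qed.

Lemma height_acyclic n k (F : {set triple n k}) (h : 'I_n -> nat) : injc F ->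
  (forall e, e \in F -> h (parent e) < h (child e)) -> ~ has_cycle F.
Proof.
move=> inj hh [es [vs [s0 ues uvs esF hj]]].
have sz : size es = size vs.
  by move: (hj); rewrite all2E => /andP[/eqP -> _]; rewrite size_zip size_rot minnn.
have hpc : forall e, e \in es -> parent e \in vs /\ child e \in vs.
  move=> e ein; have [q qin] := all2_mem hj ein; have [q1 q2] := zip_mem qin.
  rewrite mem_rot in q2.
  by rewrite /joins => /orP[/andP[/eqP-> /eqP->]|/andP[/eqP-> /eqP->]]; split.
have esF' : {subset es <= F} by move=> e /(allP esF).
have hcs : {subset vs <= map (@child n k) es}.
  have := @uniq_min_size _ (map (@child n k) es) vs.
  rewrite map_inj_in_uniq // ?size_map ?sz ?leqnn; last first.
    by move=> x y /esF' xF /esF' yF; apply: inj.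
  case=> // [x /mapP[e /hpc[_ ?] ->] //|_ heq x xv].
  by rewrite heq.
have key : forall m v, v \in vs -> m <= h v.
  elim=> // m IH v /hcs /mapP[e ein ->].
  have [pv _] := hpc e ein.
  exact: leq_ltn_trans (IH _ pv) (hh _ (esF' _ ein)).
case: vs uvs hj sz hpc hcs key => [|v0 vs] //; first by rewrite -?sz; case: es s0 {ues esF esF'} => //.
move=> _ _ _ _ _ /(_ (h v0).+1 v0); rewrite inE eqxx ltnn => /(_ isT).
done.
Qed.
Lemma connect_last n k (F : {set triple n k}) x w : connect (par F) x w -> x != w ->
  exists2 e, e \in F & child e = w /\ connect (par F) x (parent e).
Proof.
case/connectP => p pp ->; case/lastP: p pp => [|p y] /=; first by rewrite eqxx.
rewrite rcons_path last_rcons => /andP[pp /par_edge[e eF [pe ce]]] _.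
by exists e => //; split => //; rewrite pe; apply/connectP; exists p.
Qed.

Lemma connect_root n k (F : {set triple n k}) x r : connect (par F) x r -> isroot F r -> x = r.
Proof.
move=> c hr; apply/eqP; apply/negPn/negP => ne; have [e eF [ce _]] := connect_last c ne.
by move: hr; rewrite /isroot; apply/negP/negPn; apply/existsP; exists e; rewrite eF ce eqxx.
Qed.

Lemma notroot n k (F : {set triple n k}) v : ~~ isroot F v -> exists2 e, e \in F & child e = v.
Proof. by rewrite /isroot negbK => /existsP[e /andP[eF /eqP ce]]; exists e. Qed.

Lemma root_anc_ex n k (F : {set triple n k}) (h : 'I_n -> nat) :
  (forall e, e \in F -> h (parent e) < h (child e)) ->
  forall v, exists2 r, isroot F r & connect (par F) r v.
Proof.
move=> hh v; elim: (h v).+1 {-2}v (ltnSn (h v)) => // m IH {}v hv.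
case: (boolP (isroot F v)) => rv; first by exists v => //; exact: connect0.
have [e eF ce] := notroot rv.
have hlt := hh e eF; rewrite ce in hlt.
have [r rr cr] := IH (parent e) (leq_trans hlt hv).
exists r => //; apply: connect_trans cr (connect1 _); rewrite -ce; exact: edge_par.
Qed.

Lemma root_anc_uniq n k (F : {set triple n k}) (h : 'I_n -> nat) : injc F ->
  (forall e, e \in F -> h (parent e) < h (child e)) ->
  forall v r1 r2, isroot F r1 -> isroot F r2 ->
    connect (par F) r1 v -> connect (par F) r2 v -> r1 = r2.
Proof.
move=> inj hh v; elim: (h v).+1 {-2}v (ltnSn (h v)) => // m IH {}v hv r1 r2 h1 h2 c1 c2.
case: (boolP (isroot F v)) => rv.
  by rewrite (connect_root c1 rv) (connect_root c2 rv).
have [e eF ce] := notroot rv.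
have ne : forall r, isroot F r -> r != v by move=> r hr; apply: contraNneq rv => <-.
have [e1 e1F [ce1 c1']] := connect_last c1 (ne _ h1).
have [e2 e2F [ce2 c2']] := connect_last c2 (ne _ h2).
have E1 : e1 = e by apply: inj => //; rewrite ce1 ce.
have E2 : e2 = e by apply: inj => //; rewrite ce2 ce.
subst e1 e2; have hlt := hh e eF; rewrite ce in hlt.
exact: IH (leq_trans hlt hv) _ _ h1 h2 c1' c2'.
Qed.
Lemma lt_N n (N : 'I_n) (hN : N = n.-1 :> nat) (w : 'I_n) : w != N -> w < N.
Proof.
move=> ne; have := ltn_ord w; have : (w : nat) != N by [].
rewrite hN; lia.
Qed.

Lemma cmin_eq n k (N : 'I_n) (F G : {set triple n k}) v : v != N ->
  (forall e, parent e != N -> (e \in F) = (e \in G)) -> cmin F v = cmin G v.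
Proof.
move=> vN H; rewrite /cmin; apply: eq_bigl => e /=.
case: (eqVneq (parent e) v) => [pe|]; last by rewrite !andbF.
by rewrite !andbT; apply: H; rewrite pe.
Qed.

Lemma has_child_eq n k (N : 'I_n) (F G : {set triple n k}) v : v != N ->
  (forall e, parent e != N -> (e \in F) = (e \in G)) -> has_child F v = has_child G v.
Proof.
move=> vN H; rewrite /has_child; apply/existsP/existsP => -[e /andP[eF /eqP pe]];
  exists e; rewrite pe eqxx andbT; by [rewrite -H ?pe | rewrite H ?pe].
Qed.

Lemma cmin_att n k (F : {set triple n k}) v : cmin F v < k ->
  exists2 e, e \in F & parent e = v /\ (color e : nat) = cmin F v.
Proof.
suff : (cmin F v == k) || [exists e in F, (parent e == v) && ((color e : nat) == cmin F v)].
  case/orP => [/eqP -> |/existsP[e /andP[eF /andP[/eqP pe /eqP ce]]]]; first by rewrite ltnn.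
  by move=> _; exists e.
rewrite /cmin; apply: (big_ind (fun x => (x == k) || [exists e in F, (parent e == v) && ((color e : nat) == x)])).
- by rewrite eqxx.
- move=> x y hx hy /=; case: (leqP x y) => h; [exact: hx | exact: hy].
- move=> e /andP[eF pe]; apply/orP; right; apply/existsP; exists e; by rewrite eF pe eqxx.
Qed.

Lemma dec_local n k k1 (N : 'I_n) (hN : N = n.-1 :> nat) (F G : {set triple n k}) :
  G \subset Eset n k -> (forall e, parent e != N -> (e \in F) = (e \in G)) ->
  decreasing k1 F -> decreasing k1 G.
Proof.
move=> sG H dF v hc hm e eG pe ce.
case: (eqVneq v N) => [vN|vN].
  rewrite vN in pe *; apply: lt_N => //; rewrite -pe eq_sym.
  by move: (subsetP sG e eG); rewrite inE.
rewrite -(has_child_eq vN H) in hc; rewrite -(cmin_eq vN H) in hm ce *.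
by apply: (dF v hc hm e) => //; rewrite H // pe.
Qed.

Lemma ni_local n k k1 (N : 'I_n) (hN : N = n.-1 :> nat) (F G : {set triple n k}) :
  k1 <= k -> G \subset Eset n k -> (forall e, parent e != N -> (e \in F) = (e \in G)) ->
  non_increasing k1 F -> non_increasing k1 G.
Proof.
move=> hk sG H dF v hc hm.
case: (eqVneq v N) => [vN|vN].
  rewrite vN in hm *; have [e eG [pe ce]] := cmin_att (leq_trans hm hk).
  exists e; split => //; apply: lt_N => //; rewrite -pe eq_sym.
  by move: (subsetP sG e eG); rewrite inE.
rewrite -(has_child_eq vN H) in hc; rewrite -(cmin_eq vN H) in hm *.
have [e [eF pe ce cl]] := dF v hc hm.
by exists e; split => //; rewrite -H ?pe.
Qed.
Lemma construct n k (N : 'I_n) (hN : N = n.-1 :> nat) (c0 : 'I_k) (hc : c0 = 0 :> nat)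
  (P : {set triple n k} -> Prop) :
  (forall F G : {set triple n k}, G \subset Eset n k ->
      (forall e, parent e != N -> (e \in F) = (e \in G)) -> P F -> P G) ->
  forall X, colored_forest X -> P X ->
  exists T, [/\ colored_forest T /\ P T, #|T| = n.-1, T :\: act T \subset X, X \subset T &
     forall B, colored_forest B -> #|B| = n.-1 -> B :\: act B \subset X -> X \subset B -> B = T].
Proof.
move=> Ploc X fX PX.
have injX := forest_inj fX.
have ncX : ~ has_cycle X by case: fX.
have sXE : X \subset Eset n k by case: fX.
set h := hgt X.
have hX : forall e, e \in X -> h (parent e) < h (child e) by move=> e; apply: hgt_lt.
pose A := [set e : triple n k | [&& parent e == N, color e == c0, isroot X (child e) &
                                    ~~ connect (par X) (child e) N]].
have inA : forall e, e \in A -> [/\ parent e = N, color e = c0, isroot X (child e) &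
                                    ~~ connect (par X) (child e) N].
  by move=> e; rewrite inE => /and4P[/eqP -> /eqP -> -> ->].
pose T := X :|: A.
have inT : forall e, (e \in T) = (e \in X) || (e \in A) by move=> e; rewrite inE.
have AnX : forall e, e \in A -> e \notin X.
  move=> e /inA[_ _ r _]; apply/negP => eX; move: r; rewrite /isroot.
  by move/existsP; apply; exists e; rewrite eX eqxx.
have injT : injc T.
  move=> e1 e2; rewrite !inT => /orP[h1|h1] /orP[h2|h2] ce.
  - exact: injX.
  - have [_ _ r _] := inA _ h2; move: r; rewrite /isroot -ce.
    by move/existsP => H; exfalso; apply: H; exists e1; rewrite h1 eqxx.
  - have [_ _ r _] := inA _ h1; move: r; rewrite /isroot ce.
    by move/existsP => H; exfalso; apply: H; exists e2; rewrite h2 eqxx.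
  - have [p1 c1 _ _] := inA _ h1; have [p2 c2 _ _] := inA _ h2.
    move: p1 c1 p2 c2 ce; clear h1 h2; case: e1 => [[u1 w1] d1]; case: e2 => [[u2 w2] d2].
    by rewrite /parent /child /color /= => -> -> -> -> ->.
have sTE : T \subset Eset n k.
  apply/subsetP => e; rewrite inT => /orP[eX|eA]; first exact: (subsetP sXE).
  have [pe _ _ nc] := inA _ eA; rewrite inE pe; apply: contraNneq nc => <-.
  exact: connect0.
have hle : forall v, h v <= n by move=> v; rewrite /h /hgt; apply: leq_trans (max_card _) _; rewrite card_ord.
have ncT : ~ has_cycle T.
  apply: (height_acyclic (h := fun v => h v + n.+1 * ~~ connect (par X) v N)) => // e.
  rewrite inT => /orP[eX|eA].
    have hl := hX e eX.
    case cc: (connect (par X) (child e) N).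
      have -> : connect (par X) (parent e) N.
        exact: connect_trans (connect1 (edge_par eX)) cc.
      by rewrite !muln0 !addn0.
    case: (connect (par X) (parent e) N) => /=; lia.
  have [pe _ _ nc] := inA _ eA; rewrite pe connect0 (negPf nc) /=.
  have := hle N; lia.
have fT : colored_forest T by split => //; apply: inj_indeg1.
have PT : P T.
  apply: (Ploc X) => // e pe; rewrite inT; case eA: (e \in A); last by rewrite orbF.
  by have [pe' _ _ _] := inA _ eA; rewrite pe' eqxx in pe.
have [rho rr crho] := root_anc_ex hX N.
have cardT : #|T| = n.-1.
  rewrite -(card_in_imset injT); have -> : n.-1 = #|[set~ rho]| by rewrite cardsC1 card_ord.
  apply: eq_card => w; rewrite !inE; apply/imsetP/idP.
    case=> e; rewrite inT => /orP[eX|eA] ->.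
      apply/eqP => ce; move: rr; rewrite /isroot -ce.
      by move/existsP => H; apply: H; exists e; rewrite eX eqxx.
    have [_ _ _ nc] := inA _ eA; by apply: contraNneq nc => ->.
  move=> wr; case: (boolP (isroot X w)) => rw.
    case: (boolP (connect (par X) w N)) => cw.
      by rewrite (root_anc_uniq injX hX rw rr cw crho) eqxx in wr.
    exists (N, w, c0) => //; rewrite inT; apply/orP; right.
    by rewrite !inE /parent /child /color /= !eqxx rw cw.
  have [e eX ce] := notroot rw; by exists e; rewrite ?inT ?eX.
have inact : forall (B : {set triple n k}) e, (e \in act B) = [&& e \in B, (parent e : nat) == n.-1 & (color e : nat) == 0].
  by move=> B e; rewrite /act inE.
exists T; split => //.
- apply/subsetP => e; rewrite inE => /andP[ea]; rewrite inT => /orP[//|eA].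
  have [pe ce _ _] := inA _ eA; move: ea; rewrite inact inT eA orbT pe ce hN hc !eqxx.
  by [].
- exact: subsetUl.
move=> B fB cB sB1 sB2; apply/eqP; rewrite eqEcard cardT cB leqnn andbT.
have injB := forest_inj fB; have ncB : ~ has_cycle B by case: fB.
apply/subsetP => e eB; rewrite inT; case eX: (e \in X) => //=.
have ea : e \in act B.
  apply: contraFT eX => ena; apply: (subsetP sB1); by rewrite inE ena eB.
move: ea; rewrite inact eB /= => /andP[pe ce].
have pN : parent e = N by apply: val_inj; rewrite /= hN; apply/eqP.
have cc : color e = c0 by apply: val_inj; rewrite /= hc; apply/eqP.
rewrite inE pN cc !eqxx /=; apply/andP; split.
  rewrite /isroot; apply/negP => /existsP[f /andP[fX0 /eqP cf]].
  have fe : f = e by apply: injB => //; exact: (subsetP sB2).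
  by rewrite -fe fX0 in eX.
apply/negP => cX.
have cB' : connect (par B) (child e) N.
  apply: (connect_sub _ cX) => u w /par_edge[f fX0 [pf cf]]; apply: connect1.
  by rewrite -pf -cf; apply: edge_par; exact: (subsetP sB2).
have := dicycle injB ncB (edge_par eB); by rewrite pN cB'.
Qed.
Lemma main_gen n k (hn : 0 < n) (hk : 0 < k) (P : {set triple n k} -> Prop)
  (I : {set triple n k} -> Prop) :
  (forall (N : 'I_n), N = n.-1 :> nat -> forall F G : {set triple n k}, G \subset Eset n k ->
      (forall e, parent e != N -> (e \in F) = (e \in G)) -> P F -> P G) ->
  I = (fun F => colored_forest F /\ P F) ->
  [/\ covering_system (Eset n k) I n.-1,
      (forall B, is_basis I n.-1 B <-> (colored_tree B /\ I B)) &
      is_activity I n.-1 (@act n k)].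
Proof.
move=> Ploc ->.
have hn' : n.-1 < n by rewrite ltn_predL.
pose N := Ordinal hn'; pose c0 := Ordinal hk.
have hN : N = n.-1 :> nat by [].
have hc : c0 = 0 :> nat by [].
have PlocN := Ploc N hN.
have cons := construct hN hc PlocN.
have intv : forall B, colored_forest B /\ P B -> forall Z, in_interval (B :\: act B) B Z ->
    colored_forest Z /\ P Z.
  move=> B [fB PB] Z [s1 s2]; split; first exact: forest_sub s2 fB.
  apply: (PlocN B) => //; first by apply: subset_trans s2 _; case: fB.
  move=> e pe; apply/idP/idP => [eB|]; last exact: (subsetP s2).
  apply: (subsetP s1); rewrite !inE eB andbT /=; apply/negP => /andP[/eqP h _].
  by move: pe; rewrite (_ : parent e = N) ?eqxx //; apply: val_inj.
split.
- split; first by move=> X [[]].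
  split.
    move=> X [fX PX]; have [T [_ cT _ sXT _]] := cons X fX PX.
    by rewrite -cT; apply: subset_leq_card.
  move=> X [fX PX]; have [T [IT cT sTX sXT _]] := cons X fX PX.
  exists T; split => // Z [s1 s2]; apply: (intv T IT); split => //.
  exact: subset_trans sTX s1.
- move=> B; split.
    by case=> -[fB PB] cB; split => //; split.
  by case=> -[fB cB] IB; split.
split; [|split].
- by move=> B _; apply/subsetP => e; rewrite /act inE => /andP[].
- by move=> B [IB _]; apply: intv.
- move=> X [fX PX]; have [T [IT cT sTX sXT U]] := cons X fX PX.
exists T; split => //.
move=> B [[fB PB] cB] [s1 s2]; exact: U.
Qed.

Theorem proposition4p2 (n k1 k2 : nat) :
  1 <= n -> 1 <= k1 + k2 ->
  forall I : {set triple n (k1 + k2)} -> Prop,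
    (I = (fun F => colored_forest F /\ decreasing k1 F)) \/
    (I = (fun F => colored_forest F /\ non_increasing k1 F)) ->
    [/\ covering_system (Eset n (k1 + k2)) I n.-1,
        (forall B, is_basis I n.-1 B <-> (colored_tree B /\ I B)) &
        is_activity I n.-1 (@act n (k1 + k2))].
Proof.
move=> hn hk I [HI|HI].
  apply: main_gen hn hk _ I _ HI => N hN F G sG H.
  exact: (@dec_local n (k1 + k2) k1 N hN F G sG H).
apply: main_gen hn hk _ I _ HI => N hN F G sG H.
exact: (@ni_local n (k1 + k2) k1 N hN F G (leq_addr _ _) sG H).
Qed.
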